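(* Let $\mathcal A$, $\mathcal A_1$, $\mathcal A_2$, $\Pi_1,\Pi_2$ be as in the context, and let $\mathcal B$ be a bialgebra with a nondegenerate pairing $\langle\cdot,\cdot\rangle:\mathcal A\otimes\mathcal B\to\mathbb C$ satisfying $\langle a,b_1b_2\rangle=\langle\Delta(a),b_1\otimes b_2\rangle$ and $\langle a_1a_2,b\rangle=\langle a_2\otimes a_1,\Delta(b)\rangle$. Let $\mathcal R=\sum_\alpha a^\alpha\otimes b_\alpha$ be the canonical tensor of the pairing ($\{a^\alpha\},\{b_\alpha\}$ dual bases). Put $\mathcal R_i=(\Pi_i\otimes\mathrm{id})\mathcal R$, $i=1,2$. Then $\mathcal R=\mathcal R_1\cdot\mathcal R_2$ (product in $\mathcal A\hat\otimes\mathcal B$).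
   Context: $\mathcal A$ is a bialgebra with unit, comultiplication $\Delta$ and counit $\varepsilon$; $\mathcal A_1,\mathcal A_2\subset\mathcal A$ are subalgebras such that multiplication $\mathcal A_1\otimes\mathcal A_2\to\mathcal A$ is a linear isomorphism, $\Delta(\mathcal A_1)\subset\mathcal A\otimes\mathcal A_1$, $\Delta(\mathcal A_2)\subset\mathcal A_2\otimes\mathcal A$; $\Pi_1(a_1a_2)=a_1\varepsilon(a_2)$, $\Pi_2(a_1a_2)=\varepsilon(a_1)a_2$ ($a_i\in\mathcal A_i$). To make dual bases meaningful assume $\mathcal A,\mathcal B$ are graded with finite-dimensional homogeneous components, the pairing is nondegenerate between corresponding components, and tensors are taken in the completed tensor product $\mathcal A\hat\otimes\mathcal B$. Dual bases means $\sum_\alpha\langle a^\alpha,b\rangle b_\alpha=b$ for all $b\in\mathcal B$ and $\sum_\alpha a^\alpha\langle a,b_\alpha\rangle=a$ for all $a\in\mathcal A$. *)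

(* Defs.v *)
(* Abstract (possibly infinite-dimensional) vector spaces are
   MathComp lmodTypes / algTypes over a field K; tensor products are given by
   their universal property (is_tensor); maps induced on tensor products
   (f (x) g, multiplication of A (x) B, (x) of pairings, ...) are obtained from
   that universal property via [tmap]. *)
From HB Require Import structures.
From mathcomp Require Import all_boot all_order all_algebra.
From Stdlib Require Import ClassicalEpsilon.
Set Implicit Arguments. Unset Strict Implicit. Unset Printing Implicit Defensive.
Import GRing.Theory.
Local Open Scope ring_scope.

Definition is_lin (K : fieldType) (U V : lmodType K) (f : U -> V) : Prop :=
  forall (c : K) (x y : U), f (c *: x + y) = c *: f x + f y.

Definition is_bilin (K : fieldType) (U V W : lmodType K) (f : U -> V -> W) : Prop :=
  (forall v, is_lin (fun u => f u v)) /\ (forall u, is_lin (f u)).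

Definition is_tensor (K : fieldType) (U V W : lmodType K) (t : U -> V -> W) : Prop :=
  is_bilin t /\
  forall (X : lmodType K) (f : U -> V -> X), is_bilin f ->
    exists g : W -> X, [/\ is_lin g, (forall u v, g (t u v) = f u v) &
      forall g' : W -> X, is_lin g' -> (forall u v, g' (t u v) = f u v) ->
        forall w, g' w = g w].

Definition tmap (K : fieldType) (U V W X : lmodType K)
    (t : U -> V -> W) (f : U -> V -> X) : W -> X :=
  epsilon (inhabits (fun _ : W => (0 : X)))
    (fun g : W -> X => is_lin g /\ forall u v, g (t u v) = f u v).

Definition tmul (K : fieldType) (A B : algType K) (W : lmodType K)
    (t : A -> B -> W) (w w' : W) : W :=
  tmap t (fun x y => tmap t (fun x' y' => t (x * x') (y * y')) w') w.

Definition is_bialgebra (K : fieldType) (A : algType K) (AA A3 : lmodType K)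
    (tAA : A -> A -> AA) (tA3 : AA -> A -> A3) (D : A -> AA) (eps : A -> K) : Prop :=
  [/\ is_tensor tAA, is_tensor tA3, is_lin D,
      (forall (c : K) (x y : A), eps (c *: x + y) = c * eps x + eps y) &
   [/\ eps 1 = 1, (forall x y, eps (x * y) = eps x * eps y),
       D 1 = tAA 1 1, (forall x y, D (x * y) = tmul tAA (D x) (D y)) &
   [/\ (* coassociativity: (D (x) id) D = (id (x) D) D *)
       (forall a, tmap tAA (fun x y => tA3 (D x) y) (D a)
                = tmap tAA (fun x y => tmap tAA (fun p q => tA3 (tAA x p) q) (D y)) (D a)),
       (* counit: (eps (x) id) D = id = (id (x) eps) D *)
       (forall a, tmap tAA (fun x y => eps x *: y) (D a) = a) &
       (forall a, tmap tAA (fun x y => eps y *: x) (D a) = a)]]].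

(* a grading V = (+)_{n : nat} V_n given by the projections p n : V -> V_n,
   with finite-dimensional homogeneous components *)
Definition is_grading (K : fieldType) (V : lmodType K) (p : nat -> V -> V) : Prop :=
  [/\ (forall n, is_lin (p n)),
      (forall n m x, p n (p m x) = if n == m then p m x else 0),
      (forall x, exists N, (forall n, (N <= n)%N -> p n x = 0) /\
                           x = \sum_(n < N) p n x) &
      (forall n, exists s : seq V, forall x,
          exists c : nat -> K, p n x = \sum_(i < size s) c i *: s`_i)].

Definition is_graded_bialgebra (K : fieldType) (A : algType K) (AA A3 : lmodType K)
    (tAA : A -> A -> AA) (tA3 : AA -> A -> A3) (D : A -> AA) (eps : A -> K)
    (p : nat -> A -> A) : Prop :=
  [/\ is_bialgebra tAA tA3 D eps, is_grading p,
      p 0%N 1 = 1,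
      (forall n m x y, p n x = x -> p m y = y -> p (n + m)%N (x * y) = x * y) &
   [/\ (forall n x, p n x = x ->
          D x = \sum_(i < n.+1) tmap tAA (fun u v => tAA (p i u) (p (n - i)%N v)) (D x)) &
       (forall n x, (0 < n)%N -> p n x = x -> eps x = 0)]].

Definition is_subalgebra (K : fieldType) (A : algType K) (S : A -> Prop) : Prop :=
  [/\ S 1, (forall (c : K) x y, S x -> S y -> S (c *: x + y)) &
      (forall x y, S x -> S y -> S (x * y))].

(* multiplication A1 (x) A2 -> A is a linear isomorphism.  A1 (x) A2 is viewed
   as the subspace of A (x) A spanned by the x (x) y, x in A1, y in A2 *)
Definition mult_iso (K : fieldType) (A : algType K) (AA : lmodType K)
    (tAA : A -> A -> AA) (A1 A2 : A -> Prop) : Prop :=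
  (forall a, exists s : seq (A * A),
      (forall q, q \in s -> A1 q.1 /\ A2 q.2) /\ a = \sum_(q <- s) q.1 * q.2) /\
  (forall s : seq (A * A), (forall q, q \in s -> A1 q.1 /\ A2 q.2) ->
      \sum_(q <- s) q.1 * q.2 = 0 -> \sum_(q <- s) tAA q.1 q.2 = 0).

(* element of A (x) B given by the (k,m)-homogeneous component (in A_k (x) B_m)
   of the formal series  sum_alpha f(a^alpha) (x) b_alpha , where e n lists the
   pairs (a^alpha, b_alpha) of degree n (only those with b_alpha in B_m
   contribute to the component (k,m)) *)
Definition cser (K : fieldType) (A B : lmodType K) (AB : lmodType K)
    (tAB : A -> B -> AB) (pA : nat -> A -> A) (pB : nat -> B -> B)
    (e : nat -> seq (A * B)) (f : A -> A) (k m : nat) : AB :=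
  \sum_(q <- e m) tAB (pA k (f q.1)) (pB m q.2).

(* product in the completed tensor product  A ^(x) B = prod_{k,m} A_k (x) B_m ,
   elements being represented by their families of homogeneous components *)
Definition cmul (K : fieldType) (W : lmodType K) (mul : W -> W -> W)
    (F G : nat -> nat -> W) (n m : nat) : W :=
  \sum_(i < n.+1) \sum_(j < m.+1)
      mul (F i j) (G (n - i)%N (m - j)%N).

(* Main.v *)
Require Import Defs.
From HB Require Import structures.
From mathcomp Require Import all_boot all_order all_algebra.
From Stdlib Require Import ClassicalEpsilon FunctionalExtensionality.
Set Implicit Arguments. Unset Strict Implicit. Unset Printing Implicit Defensive.
Import GRing.Theory.
Local Open Scope ring_scope.

Lemma lin0 (K : fieldType) (U V : lmodType K) (f : U -> V) : is_lin f -> f 0 = 0.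
Proof.
move=> H; have E := H 1 0 0; rewrite !scale1r addr0 in E.
by apply: (addrI (f 0)); rewrite addr0 -E.
Qed.
Lemma linD (K : fieldType) (U V : lmodType K) (f : U -> V) : is_lin f -> forall x y, f (x + y) = f x + f y.
Proof. by move=> H x y; have := H 1 x y; rewrite !scale1r. Qed.
Lemma linZ (K : fieldType) (U V : lmodType K) (f : U -> V) : is_lin f -> forall c x, f (c *: x) = c *: f x.
Proof. by move=> H c x; have := H c x 0; rewrite !addr0 (lin0 H) addr0. Qed.
Lemma lin_sum (K : fieldType) (U V : lmodType K) (f : U -> V) (I : Type) (r : seq I) (P : pred I) (F : I -> U) :
  is_lin f -> f (\sum_(i <- r | P i) F i) = \sum_(i <- r | P i) f (F i).
Proof. by move=> H; apply: (big_morph f (linD H) (lin0 H)). Qed.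

Lemma tmap_spec (K : fieldType) (U V W X : lmodType K) (t : U -> V -> W) (f : U -> V -> X) :
  is_tensor t -> is_bilin f -> is_lin (tmap t f) /\ forall u v, tmap t f (t u v) = f u v.
Proof.
case=> _ Hu Hf; have [g [Hg1 Hg2 _]] := Hu X f Hf.
rewrite /tmap; apply: (epsilon_spec (inhabits (fun _ : W => (0 : X)))
  (fun g : W -> X => is_lin g /\ forall u v, g (t u v) = f u v)).
by exists g.
Qed.

Lemma tmap_sum (K : fieldType) (U V W X : lmodType K) (t : U -> V -> W) (f : U -> V -> X)
  (I : Type) (r : seq I) (F : I -> U) (G : I -> V) :
  is_tensor t -> is_bilin f ->
  tmap t f (\sum_(i <- r) t (F i) (G i)) = \sum_(i <- r) f (F i) (G i).
Proof.
move=> Ht Hf; have [Hl Hv] := tmap_spec Ht Hf.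
by rewrite (lin_sum _ _ _ Hl); apply: eq_bigr => i _; rewrite Hv.
Qed.

Lemma tmul_sum (K : fieldType) (A B : algType K) (W : lmodType K) (t : A -> B -> W)
  (I J : Type) (r : seq I) (r' : seq J) (F : I -> A) (G : I -> B) (F' : J -> A) (G' : J -> B) :
  is_tensor t ->
  tmul t (\sum_(i <- r) t (F i) (G i)) (\sum_(j <- r') t (F' j) (G' j))
  = \sum_(i <- r) \sum_(j <- r') t (F i * F' j) (G i * G' j).
Proof.
move=> Ht; have [[Ht1 Ht2] _] := Ht.
rewrite /tmul.
have -> : (fun x y => tmap t (fun x' y' => t (x * x') (y * y'))
            (\sum_(j <- r') t (F' j) (G' j)))
          = (fun x y => \sum_(j <- r') t (x * F' j) (y * G' j)).
  apply: functional_extensionality => x; apply: functional_extensionality => y.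
  apply: tmap_sum => //; split.
  - move=> v c x1 x2 /=; rewrite mulrDr -scalerAr; exact: Ht1.
  - move=> u c x1 x2 /=; rewrite mulrDr -scalerAr; exact: Ht2.
apply: tmap_sum => //; split.
- move=> v c x1 x2 /=; rewrite scaler_sumr -big_split; apply: eq_bigr => j _.
  rewrite mulrDl -scalerAl; exact: Ht1.
- move=> u c x1 x2 /=; rewrite scaler_sumr -big_split; apply: eq_bigr => j _.
  rewrite mulrDl -scalerAl; exact: Ht2.
Qed.
Lemma sum_single (V : nmodType) (M j : nat) (F : nat -> V) :
  (j < M)%N -> (forall n, n != j -> F n = 0) -> \sum_(n < M) F n = F j.
Proof.
move=> HjM HF; rewrite (bigD1 (Ordinal HjM)) //= big1 ?addr0 // => i Hi.
apply: HF; apply: contra Hi => /eqP Hij; apply/eqP; apply: val_inj => /=; exact Hij.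
Qed.

Lemma sum_single' (V : nmodType) (M j : nat) (Hj : (j < M)%N) (F : 'I_M -> V) :
  (forall i : 'I_M, (val i != j) -> F i = 0) -> \sum_(i < M) F i = F (Ordinal Hj).
Proof.
move=> HF; rewrite (bigD1 (Ordinal Hj)) //= big1 ?addr0 //.
Qed.

Lemma grade_decomp (K : fieldType) (V : lmodType K) (p : nat -> V -> V) :
  is_grading p -> forall x, exists N, forall M, (N <= M)%N -> x = \sum_(n < M) p n x.
Proof.
case=> _ _ Hd _ x; have [N [HN Hx]] := Hd x; exists N => M HM.
rewrite {1}Hx (big_ord_widen M (fun n => p n x) HM) big_mkcond /=.
apply: eq_bigr => i _; case: ifP => // /negbT; rewrite -leqNgt => /HN ->; done.
Qed.

Lemma grade_idem (K : fieldType) (V : lmodType K) (p : nat -> V -> V) :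
  is_grading p -> forall n m x, p m x = x -> p n x = if n == m then x else 0.
Proof. by case=> _ Hi _ _ n m x <-; rewrite Hi. Qed.

Lemma prod_grade (K : fieldType) (A : algType K) (p : nat -> A -> A) :
  is_grading p ->
  (forall n m x y, p n x = x -> p m y = y -> p (n + m)%N (x * y) = x * y) ->
  forall k x y, p k (x * y) = \sum_(i < k.+1) p i x * p (k - i)%N y.
Proof.
move=> Hg Hm k x y.
have [Hl Hi _ _] := Hg.
have [N1 H1] := grade_decomp Hg x; have [N2 H2] := grade_decomp Hg y.
pose M := (maxn (maxn N1 N2) k.+1).
have HM1 : (N1 <= M)%N by rewrite /M !leq_max leqnn.
have HM2 : (N2 <= M)%N by rewrite /M !leq_max leqnn orbT.
have HMk : (k.+1 <= M)%N by rewrite /M leq_max leqnn orbT.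
rewrite {1}(H1 M HM1) {1}(H2 M HM2) mulr_suml (lin_sum _ _ _ (Hl k)).
have hom : forall a b : nat, p (a + b)%N (p a x * p b y) = p a x * p b y.
  by move=> a b; apply: Hm; rewrite Hi eqxx.
transitivity (\sum_(a < M) (if (a < k.+1)%N then p a x * p (k - a)%N y else 0)).
  apply: eq_bigr => a _; rewrite mulr_sumr (lin_sum _ _ _ (Hl k)).
  under eq_bigr => b _ do rewrite -hom Hi hom.
  case: ifP => Hak.
  - have Hb : (k - a < M)%N by apply: leq_ltn_trans (leq_subr _ _) HMk.
    rewrite (bigD1 (Ordinal Hb)) //=.
    have Hak' : (a <= k)%N by rewrite -ltnS Hak.
    rewrite (subnKC Hak') eqxx big1 ?addr0 // => b Hb'.
    case: eqP => // Hkab; case/negP: Hb'; apply/eqP; apply: val_inj => /=.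
    by rewrite Hkab addKn.
  - rewrite big1 // => b _; case: eqP => // Hkab; move: Hak; rewrite Hkab ltnS leq_addr //.
rewrite (big_ord_widen M (fun a => p a x * p (k - a)%N y) HMk) [RHS]big_mkcond.
by apply: eq_bigr.

Qed.

Lemma pure_big (K : fieldType) (U V W : lmodType K) (t : U -> V -> W) (I : Type) (r : seq I) (F : I -> W) :
  (forall i, exists s : seq (U * V), F i = \sum_(p <- s) t p.1 p.2) ->
  exists s : seq (U * V), \sum_(i <- r) F i = \sum_(p <- s) t p.1 p.2.
Proof.
move=> HF; elim: r => [|i r [s Hs]]; first by exists [::]; rewrite !big_nil.
have [si Hi] := HF i; exists (si ++ s); by rewrite big_cons big_cat /= Hi Hs.
Qed.

Lemma pure_bigP (K : fieldType) (U V W : lmodType K) (t : U -> V -> W) (I : Type) (r : seq I) (P : pred I) (F : I -> W) :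
  (forall i, P i -> exists s : seq (U * V), F i = \sum_(p <- s) t p.1 p.2) ->
  exists s : seq (U * V), \sum_(i <- r | P i) F i = \sum_(p <- s) t p.1 p.2.
Proof.
move=> HF; elim: r => [|i r [s Hs]]; first by exists [::]; rewrite !big_nil.
rewrite big_cons; case: ifP => Pi; last by exists s.
have [si Hi] := HF i Pi; exists (si ++ s); by rewrite big_cat /= Hi Hs.
Qed.

Lemma tmap_sumP (K : fieldType) (U V W X : lmodType K) (t : U -> V -> W) (f : U -> V -> X)
  (s : seq (U * V)) :
  is_tensor t -> is_bilin f ->
  tmap t f (\sum_(p <- s) t p.1 p.2) = \sum_(p <- s) f p.1 p.2.
Proof. by move=> Ht Hf; exact: (@tmap_sum K U V W X t f _ s fst snd Ht Hf). Qed.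

Lemma tmap_sum2 (K : fieldType) (U V W X : lmodType K) (t : U -> V -> W) (f : U -> V -> X)
  (I J : Type) (r : seq I) (r' : seq J) (F : I -> J -> U) (G : I -> J -> V) :
  is_tensor t -> is_bilin f ->
  tmap t f (\sum_(i <- r) \sum_(j <- r') t (F i j) (G i j))
  = \sum_(i <- r) \sum_(j <- r') f (F i j) (G i j).
Proof.
move=> Ht Hf; have [Hl Hv] := tmap_spec Ht Hf.
rewrite (lin_sum _ _ _ Hl); apply: eq_bigr => i _.
by rewrite (lin_sum _ _ _ Hl); apply: eq_bigr => j _; rewrite Hv.
Qed.

From mathcomp Require Import complex Rstruct.
From Stdlib Require Import Reals.
Import GRing.Theory.
Local Open Scope ring_scope.

Theorem mainTheorem10
  (A B : algType (Rdefinitions.R)[i])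
  (* tensor square / cube of A and B, and A (x) B *)
  (AA A3 BB B3 AB : lmodType (Rdefinitions.R)[i])
  (tAA : A -> A -> AA) (tA3 : AA -> A -> A3)
  (tBB : B -> B -> BB) (tB3 : BB -> B -> B3)
  (tAB : A -> B -> AB)
  (* bialgebra structures and gradings *)
  (DA : A -> AA) (epsA : A -> (Rdefinitions.R)[i]) (pA : nat -> A -> A)
  (DB : B -> BB) (epsB : B -> (Rdefinitions.R)[i]) (pB : nat -> B -> B)
  (A1 A2 : A -> Prop) (Pi1 Pi2 : A -> A)
  (pair : A -> B -> (Rdefinitions.R)[i])
  (e : nat -> seq (A * B))
  (HA : is_graded_bialgebra tAA tA3 DA epsA pA)
  (HB : is_graded_bialgebra tBB tB3 DB epsB pB)
  (HAB : is_tensor tAB)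
  (* A1, A2 subalgebras, multiplication A1 (x) A2 -> A an isomorphism *)
  (HA1 : is_subalgebra A1) (HA2 : is_subalgebra A2)
  (Hmult : mult_iso tAA A1 A2)
  (* D(A1) in A (x) A1, D(A2) in A2 (x) A *)
  (HD1 : forall x, A1 x -> exists s : seq (A * A),
           (forall q, q \in s -> A1 q.2) /\ DA x = \sum_(q <- s) tAA q.1 q.2)
  (HD2 : forall x, A2 x -> exists s : seq (A * A),
           (forall q, q \in s -> A2 q.1) /\ DA x = \sum_(q <- s) tAA q.1 q.2)
  (* Pi1 (a1 a2) = a1 eps(a2), Pi2 (a1 a2) = eps(a1) a2 *)
  (HPi1 : is_lin Pi1) (HPi2 : is_lin Pi2)
  (HPi1m : forall x y, A1 x -> A2 y -> Pi1 (x * y) = epsA y *: x)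
  (HPi2m : forall x y, A1 x -> A2 y -> Pi2 (x * y) = epsA x *: y)
  (* the pairing: bilinear, graded, nondegenerate on corresponding components *)
  (Hpl : forall b, is_lin (fun a => pair a b : (Rdefinitions.R)[i]^o))
  (Hpr : forall a, is_lin (fun b => pair a b : (Rdefinitions.R)[i]^o))
  (Hpgr : forall n m a b, n != m -> pair (pA n a) (pB m b) = 0)
  (HndA : forall n a, pA n a = a -> (forall b, pB n b = b -> pair a b = 0) -> a = 0)
  (HndB : forall n b, pB n b = b -> (forall a, pA n a = a -> pair a b = 0) -> b = 0)
  (* <a, b1 b2> = <D(a), b1 (x) b2> *)
  (HpD : forall a b1 b2, pair a (b1 * b2)
          = tmap tAA (fun x y => (pair x b1 * pair y b2 : (Rdefinitions.R)[i]^o)) (DA a))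
  (* <a1 a2, b> = <a2 (x) a1, D(b)> *)
  (HpM : forall a1 a2 b, pair (a1 * a2) b
          = tmap tBB (fun u v => (pair a2 u * pair a1 v : (Rdefinitions.R)[i]^o)) (DB b))
  (* dual bases {a^alpha}, {b_alpha}: e n lists the pairs (a^alpha, b_alpha)
     of degree n *)
  (He_hom : forall n q, q \in e n -> pA n q.1 = q.1 /\ pB n q.2 = q.2)
  (He_B : forall b, exists N : nat, forall M : nat, leq N M ->
            \sum_(n < M) \sum_(q <- e n) pair q.1 b *: q.2 = b)
  (He_A : forall a, exists N : nat, forall M : nat, leq N M ->
            \sum_(n < M) \sum_(q <- e n) pair a q.2 *: q.1 = a) :
  (* R = R1 . R2 in the completed tensor product, componentwise *)
  forall k m : nat,
    cser tAB pA pB e (fun a : A => a) k m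
    = cmul (tmul tAB) (cser tAB pA pB e Pi1) (cser tAB pA pB e Pi2) k m.
Proof.
move=> k m.
case: HA => [[HtAA _ HDAl HepsAl [HepsA1 HepsAM _ HDAM [_ HcuL HcuR]]] HgA _ HmulA [HDgr _]].
case: HB => [_ HgB _ HmulB _].
case: HA1 => [H11 H1l H1m]; case: HA2 => [H21 H2l H2m].
case: Hmult => [Hdec _].
have [[HtAA1 HtAA2] _] := HtAA.
have [[HtAB1 HtAB2] _] := HAB.
have HepsL : is_lin (fun a => epsA a : (Rdefinitions.R)[i]^o) by [].
have P1r : forall x y, A2 y -> Pi1 (x * y) = epsA y *: Pi1 x.
  move=> x y Hy; have [s [Hs ->]] := Hdec x.
  rewrite mulr_suml !(lin_sum _ _ _ HPi1) scaler_sumr; apply: eq_big_seq => q Hq.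
  have [h1 h2] := Hs q Hq.
  rewrite -mulrA (HPi1m _ _ h1 (H2m _ _ h2 Hy)) (HPi1m _ _ h1 h2).
  by rewrite (HepsAM q.2 y) scalerA mulrC.
have P2l : forall x y, A1 x -> Pi2 (x * y) = epsA x *: Pi2 y.
  move=> x y Hx; have [s [Hs ->]] := Hdec y.
  rewrite mulr_sumr !(lin_sum _ _ _ HPi2) scaler_sumr; apply: eq_big_seq => q Hq.
  have [h1 h2] := Hs q Hq.
  rewrite mulrA (HPi2m _ _ (H1m _ _ Hx h1) h2) (HPi2m _ _ h1 h2).
  by rewrite (HepsAM x q.1) scalerA.
have Hgb : is_bilin (fun u v : A => Pi1 u * Pi2 v).
  split => [v c x1 x2 | u c x1 x2] /=.
  - by rewrite HPi1 mulrDl -scalerAl.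
  - by rewrite HPi2 mulrDr -scalerAr.
have Hpure : forall a, exists s : seq (A * A), DA a = \sum_(p <- s) tAA p.1 p.2.
  move=> a; have [s [Hs ->]] := Hdec a; rewrite (lin_sum _ _ _ HDAl) big_seq.
  apply: pure_bigP => q Hq; have [h1 h2] := Hs q Hq.
  have [s1 [_ E1]] := HD1 _ h1; have [s2 [_ E2]] := HD2 _ h2.
  rewrite HDAM E1 E2 tmul_sum //.
  apply: pure_big => p1; apply: pure_big => p2.
  by exists [:: (p1.1 * p2.1, p1.2 * p2.2)]; rewrite big_seq1.
have HbR : is_bilin (fun x y : A => epsA y *: x).
  split => [v c x1 x2 | u c x1 x2] /=.
  - by rewrite scalerDr !scalerA mulrC.
  - by rewrite HepsAl scalerDl scalerA.
have HbL : is_bilin (fun x y : A => epsA x *: y).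
  split => [v c x1 x2 | u c x1 x2] /=.
  - by rewrite HepsAl scalerDl scalerA.
  - by rewrite scalerDr !scalerA mulrC.
have Pi1id : forall x, A1 x -> Pi1 x = x.
  by move=> x hx; rewrite -{1}[x]mulr1 HPi1m // HepsA1 scale1r.
have Pi2id : forall y, A2 y -> Pi2 y = y.
  by move=> y hy; rewrite -{1}[y]mul1r HPi2m // HepsA1 scale1r.
have Hcore2 : forall x y, A1 x -> A2 y ->
    tmap tAA (fun u v : A => Pi1 u * Pi2 v) (DA (x * y)) = x * y.
  move=> x y hx hy.
  have [s1 [Hs1 E1]] := HD1 x hx; have [s2 [Hs2 E2]] := HD2 y hy.
  have cx : \sum_(p <- s1) epsA p.2 *: p.1 = x.
    by rewrite -[RHS](HcuR x) E1 tmap_sumP.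
  have cy : \sum_(p <- s2) epsA p.1 *: p.2 = y.
    by rewrite -[RHS](HcuL y) E2 tmap_sumP.
  rewrite HDAM E1 E2 tmul_sum // tmap_sum2 //.
  transitivity (Pi1 x * Pi2 y); last by rewrite Pi1id // Pi2id.
  rewrite -cx -cy (lin_sum _ _ _ HPi1) (lin_sum _ _ _ HPi2) mulr_suml.
  apply: eq_big_seq => p1 h1; rewrite mulr_sumr; apply: eq_big_seq => p2 h2.
  rewrite (P1r p1.1 p2.1 (Hs2 _ h2)) (P2l p1.2 p2.2 (Hs1 _ h1)) !(linZ HPi1) !(linZ HPi2).
  by rewrite -!scalerAl -!scalerAr !scalerA mulrC.
have Hcore : forall a, tmap tAA (fun u v : A => Pi1 u * Pi2 v) (DA a) = a.
  move=> a; have [s [Hs E]] := Hdec a; have [Hl _] := tmap_spec HtAA Hgb.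
  rewrite E (lin_sum _ _ _ HDAl) (lin_sum _ _ _ Hl).
  apply: eq_big_seq => q Hq; have [h1 h2] := Hs q Hq; exact: Hcore2.
have pair_sumL : forall b (I : Type) (r : seq I) (P : pred I) (F : I -> A),
    pair (\sum_(i <- r | P i) F i) b = \sum_(i <- r | P i) pair (F i) b.
  by move=> b I r P F; exact: (lin_sum _ _ _ (Hpl b)).
have pair_sumR : forall a (I : Type) (r : seq I) (P : pred I) (F : I -> B),
    pair a (\sum_(i <- r | P i) F i) = \sum_(i <- r | P i) pair a (F i).
  by move=> a I r P F; exact: (lin_sum _ _ _ (Hpr a)).
have dualA : forall x j, \sum_(q <- e j) pair x q.2 *: q.1 = pA j x.
  move=> x j.
  have Hx : forall q, q \in e j -> pair x q.2 = pair (pA j x) q.2.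
    move=> q Hq; have [_ hq2] := He_hom j q Hq.
    have [N' HN'] := grade_decomp HgA x.
    rewrite {1}(HN' (maxn N' j.+1) (leq_maxl _ _)) pair_sumL.
    rewrite (sum_single' (leq_maxr N' j.+1)) // => n hn.
    by rewrite -hq2 Hpgr.
  transitivity (\sum_(q <- e j) pair (pA j x) q.2 *: q.1).
    by apply: eq_big_seq => q Hq; rewrite Hx.
  have [N HN] := He_A (pA j x).
  rewrite -{2}(HN (maxn N j.+1) (leq_maxl _ _)) (sum_single' (leq_maxr N j.+1)) // => n hn.
  apply: big1_seq => q Hq; have [_ hq2] := He_hom n q Hq.
  by rewrite -hq2 Hpgr ?scale0r // eq_sym.
have dualB : forall n b, pB n b = b -> \sum_(r <- e n) pair r.1 b *: r.2 = b.
  move=> n b Hb; have [N HN] := He_B b.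
  rewrite -{2}(HN (maxn N n.+1) (leq_maxl _ _)) (sum_single' (leq_maxr N n.+1)) // => n' hn'.
  apply: big1_seq => r Hr; have [hr1 _] := He_hom n' r Hr.
  by rewrite -hr1 -Hb Hpgr ?scale0r.
have [HpAl HpAi _ _] := HgA.
have [HpBl HpBi _ _] := HgB.
have Sa : forall n a, pA n a = a ->
    \sum_(j < n.+1) \sum_(q <- e j) \sum_(q' <- e (subn n j))
       pair a (q.2 * q'.2) *: (Pi1 q.1 * Pi2 q'.1) = a.
  move=> n a Ha.
  have [s Es] := Hpure a.
  have Hpd : forall b1 b2, pair a (b1 * b2) = \sum_(p <- s) pair p.1 b1 * pair p.2 b2.
    move=> b1 b2; rewrite HpD Es tmap_sumP //.
    split => [v c x1 x2 | u c x1 x2] /=.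
    - by rewrite (Hpl b1) mulrDl -scalerAl.
    - by rewrite (Hpl b2) mulrDr; congr (_ + _); apply: mulrCA.
  have Hbh : forall i, is_bilin (fun u v => tAA (pA i u) (pA (subn n i) v)).
    move=> i; split => [v c x1 x2 | u c x1 x2] /=.
    - by rewrite HpAl HtAA1.
    - by rewrite HpAl HtAA2.
  transitivity (\sum_(j < n.+1) \sum_(p <- s) Pi1 (pA j p.1) * Pi2 (pA (subn n j) p.2)).
    apply: eq_bigr => j _.
    under [RHS]eq_bigr => p _ do rewrite -(dualA p.1 j) -(dualA p.2 (subn n j))
       (lin_sum _ _ _ HPi1) (lin_sum _ _ _ HPi2) mulr_suml.
    under [RHS]eq_bigr => p _ do under eq_bigr => q _ do rewrite mulr_sumr.
    rewrite [RHS]exchange_big /=; apply: eq_bigr => q _.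
    rewrite [RHS]exchange_big /=; apply: eq_bigr => q' _.
    rewrite Hpd scaler_suml; apply: eq_bigr => p _.
    by rewrite (linZ HPi1) (linZ HPi2) -scalerAl -scalerAr scalerA.
  rewrite -{1}(Hcore a) (HDgr n a Ha) Es.
  have E2 : \sum_(i < n.+1) tmap tAA (fun u v => tAA (pA i u) (pA (subn n i) v))
             (\sum_(p <- s) tAA p.1 p.2)
           = \sum_(i < n.+1) \sum_(p <- s) tAA (pA i p.1) (pA (subn n i) p.2).
    by apply: eq_bigr => i _; exact: tmap_sumP.
  by rewrite E2 tmap_sum2.
have tAB_sumL : forall v (I : Type) (r : seq I) (P : pred I) (F : I -> A),
    tAB (\sum_(i <- r | P i) F i) v = \sum_(i <- r | P i) tAB (F i) v.
  by move=> v I r P F; exact: (lin_sum _ _ _ (HtAB1 v)).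
have tAB_sumR : forall u (I : Type) (r : seq I) (P : pred I) (F : I -> B),
    tAB u (\sum_(i <- r | P i) F i) = \sum_(i <- r | P i) tAB u (F i).
  by move=> u I r P F; exact: (lin_sum _ _ _ (HtAB2 u)).
have tAB_ZL : forall c u v, tAB (c *: u) v = c *: tAB u v.
  by move=> c u v; exact: (linZ (HtAB1 v)).
have tAB_ZR : forall c u v, tAB u (c *: v) = c *: tAB u v.
  by move=> c u v; exact: (linZ (HtAB2 u)).
have Htm := fun I J r r' F G F' G' => @tmul_sum _ A B AB tAB I J r r' F G F' G' HAB.
rewrite /cmul /cser.
under [RHS]eq_bigr => i _ do under eq_bigr => j _ do rewrite Htm.
rewrite [RHS]exchange_big /=.
under [RHS]eq_bigr => j _ do rewrite exchange_big /=.
under [RHS]eq_bigr => j _ do under eq_bigr => q _ do rewrite exchange_big /=.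
transitivity (\sum_(r <- e m) tAB (\sum_(j < m.+1) \sum_(q <- e j) \sum_(q' <- e (subn m j))
    pair r.1 (q.2 * q'.2) *: pA k (Pi1 q.1 * Pi2 q'.1)) r.2).
  apply: eq_big_seq => r Hr; have [h1 h2] := He_hom m r Hr.
  rewrite h2; congr (tAB _ r.2).
  rewrite -{1}(Sa m r.1 h1) (lin_sum _ _ _ (HpAl k)); apply: eq_bigr => j _.
  rewrite (lin_sum _ _ _ (HpAl k)); apply: eq_bigr => q _.
  rewrite (lin_sum _ _ _ (HpAl k)); apply: eq_bigr => q' _.
  by rewrite (linZ (HpAl k)).
under [LHS]eq_bigr => r _ do rewrite tAB_sumL.
under [LHS]eq_bigr => r _ do under eq_bigr => j _ do rewrite tAB_sumL.
under [LHS]eq_bigr => r _ do under eq_bigr => j _ do under eq_bigr => q _ do rewrite tAB_sumL.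
rewrite [LHS]exchange_big /=; apply: eq_bigr => j _.
rewrite [LHS]exchange_big /=; apply: eq_big_seq => q Hq.
rewrite [LHS]exchange_big /=; apply: eq_big_seq => q' Hq'.
have Hjm : leq j m by exact: (ltn_ord j).
have [_ hq2] := He_hom j q Hq; have [_ hq'2] := He_hom (subn m j) q' Hq'.
rewrite -tAB_sumL -(prod_grade HgA HmulA) hq2 hq'2.
have Hb : pB m (q.2 * q'.2) = q.2 * q'.2.
  by have := HmulB j (subn m j) q.2 q'.2 hq2 hq'2; rewrite subnKC.
rewrite -{2}(dualB m _ Hb) tAB_sumR; apply: eq_bigr => r _.
by rewrite tAB_ZL tAB_ZR.
Qed.
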